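(* Every plane of $\mathcal W(5,q)$ containing a line of $\mathcal S$ is disjoint from $S_\gamma^G$.
   Context: Let $q$ be an even prime power and $\mathrm{PG}(5,q^2)$ have homogeneous coordinates $(X_1,\dots,X_6)$, points written as column vectors. Let $\Sigma$ be the set of points having a coordinate vector $(\alpha,\alpha^q,\delta_0,\beta,\beta^q,\delta_1)$ with $\alpha,\beta\in\mathbb F_{q^2}$, $\delta_0,\delta_1\in\mathbb F_q$ (a Baer subgeometry $\cong\mathrm{PG}(5,q)$). Let $\Pi=\Sigma\cap\{X_6=0\}$, $\mathcal Q=\Sigma\cap\{X_6=0,\ X_3^2+X_1X_5+X_2X_4=0\}$. Fix $\omega\in\mathbb F_{q^2}\setminus\mathbb F_q$ with $\omega+\omega^q=1$ and let $h(X,Y)=\omega X_1Y_4^q+\omega^qX_1Y_6^q+\omega^qX_2Y_5^q+\omega X_2Y_6^q+X_3Y_6^q+\omega^qX_4Y_1^q+\omega X_5Y_2^q+\omega X_6Y_1^q+\omega^qX_6Y_2^q+X_6Y_3^q$. Restricted to $\Sigma$, $P\perp R\iff h(P,R)=0$ defines a symplectic polarity $\perp$ of $\Sigma$; $\mathcal W(5,q)$ is the associated symplectic polar space (generators are totally isotropic planes). For $a,b,c,d\in\mathbb F_{q^2}$ with $ad+bc=1$ let $M_{a,b,c,d}$ be the $6\times6$ matrix with rows $(a^2,0,0,0,c^2,\tfrac{c(a+c\omega^q)}{\omega})$, $(0,a^{2q},0,c^{2q},0,\tfrac{c^q(a^q+c^q\omega)}{\omega^q})$, $(ab,a^qb^q,1,c^qd^q,cd,\tfrac{d(a+c\omega^q)}{\omega}+\tfrac{d^q(a^q+c^q\omega)}{\omega^q}+\tfrac{1}{\omega^{q+1}})$,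 $(0,b^{2q},0,d^{2q},0,\tfrac{d^q(b^q+d^q\omega)+\omega}{\omega^q})$, $(b^2,0,0,0,d^2,\tfrac{d(b+d\omega^q)+\omega^q}{\omega})$, $(0,0,0,0,0,1)$, and let $G$ be the group of projectivities $X\mapsto M_{a,b,c,d}X$. Fix $\gamma\in\mathbb F_{q^2}$ with $X^2+X+\gamma$ irreducible over $\mathbb F_{q^2}$, let $S_\gamma=\left(\frac{\gamma}{\omega},\frac{\gamma^q}{\omega^q},\frac{\omega^q\gamma}{\omega}+\frac{\omega\gamma^q}{\omega^q},1,1,1\right)$ and $S_\gamma^G$ its $G$-orbit. Let $\mathcal S$ be the set of the $q^2+1$ lines $S_t=\{(\lambda,\lambda^q,\lambda t+\lambda^qt^q,\lambda^qt^{2q},\lambda t^2,0):\lambda\in\mathbb F_{q^2}^*\}$, $t\in\mathbb F_{q^2}$, and $S_\infty=\{(0,0,0,\lambda^q,\lambda,0):\lambda\in\mathbb F_{q^2}^*\}$. *)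

(* Defs.v *)
From HB Require Import structures.
From mathcomp Require Import all_boot all_order all_algebra all_field.
Set Implicit Arguments. Unset Strict Implicit. Unset Printing Implicit Defensive.
Import GRing.Theory.
Local Open Scope ring_scope.

Section Defs.
Variable F : finFieldType.   (* plays the role of F_{q^2} *)
Variable q : nat.

Definition cj (x : F) : F := x ^+ q.
Definition inFq (x : F) : bool := x ^+ q == x.

Definition mk6 (x1 x2 x3 x4 x5 x6 : F) : 'cV[F]_6 :=
  \col_(i < 6) nth 0 [:: x1; x2; x3; x4; x5; x6] i.

(* the k-th coordinate X_k (k = 1..6) *)
Definition crd (v : 'cV[F]_6) (k : nat) : F := v (inord k.-1) 0.

(* points of PG(5,q^2) given by nonzero vectors; same point = proportional *)
Definition same_point (u v : 'cV[F]_6) : Prop :=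
  u != 0 /\ v != 0 /\ exists c : F, u = c *: v.

Definition inSigma (v : 'cV[F]_6) : Prop :=
  v != 0 /\ exists (c a b d0 d1 : F), inFq d0 /\ inFq d1 /\
    v = c *: mk6 a (cj a) d0 b (cj b) d1.

Definition hform (w : F) (X Y : 'cV[F]_6) : F :=
  w * crd X 1 * cj (crd Y 4) + cj w * crd X 1 * cj (crd Y 6)
  + cj w * crd X 2 * cj (crd Y 5) + w * crd X 2 * cj (crd Y 6)
  + crd X 3 * cj (crd Y 6) + cj w * crd X 4 * cj (crd Y 1)
  + w * crd X 5 * cj (crd Y 2) + w * crd X 6 * cj (crd Y 1)
  + cj w * crd X 6 * cj (crd Y 2) + crd X 6 * cj (crd Y 3).

Definition in_span3 (u1 u2 u3 v : 'cV[F]_6) : Prop :=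
  exists k1 k2 k3 : F, v = k1 *: u1 + k2 *: u2 + k3 *: u3.

Definition indep3 (u1 u2 u3 : 'cV[F]_6) : Prop :=
  forall k1 k2 k3 : F, k1 *: u1 + k2 *: u2 + k3 *: u3 = 0 ->
    k1 = 0 /\ k2 = 0 /\ k3 = 0.

Definition plane_pt (u1 u2 u3 v : 'cV[F]_6) : Prop :=
  inSigma v /\ in_span3 u1 u2 u3 v.

Definition W_plane (w : F) (u1 u2 u3 : 'cV[F]_6) : Prop :=
  [/\ inSigma u1, inSigma u2, inSigma u3, indep3 u1 u2 u3 &
      forall P R, plane_pt u1 u2 u3 P -> plane_pt u1 u2 u3 R -> hform w P R = 0].

Definition Mabcd (w a b c d : F) : 'M[F]_6 :=
  let rows := [::
    [:: a ^+ 2; 0; 0; 0; c ^+ 2; c * (a + c * cj w) / w];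
    [:: 0; cj a ^+ 2; 0; cj c ^+ 2; 0; cj c * (cj a + cj c * w) / cj w];
    [:: a * b; cj a * cj b; 1; cj c * cj d; c * d;
        d * (a + c * cj w) / w + cj d * (cj a + cj c * w) / cj w
        + 1 / (w * cj w)];
    [:: 0; cj b ^+ 2; 0; cj d ^+ 2; 0; (cj d * (cj b + cj d * w) + w) / cj w];
    [:: b ^+ 2; 0; 0; 0; d ^+ 2; (d * (b + d * cj w) + cj w) / w];
    [:: 0; 0; 0; 0; 0; 1] ] in
  \matrix_(i < 6, j < 6) nth 0 (nth [::] rows i) j.

Definition Sgamma (w g : F) : 'cV[F]_6 :=
  mk6 (g / w) (cj g / cj w) (cj w * g / w + w * cj g / cj w) 1 1 1.

Definition in_SgG (w g : F) (v : 'cV[F]_6) : Prop :=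
  exists a b c d : F, a * d + b * c = 1 /\ same_point v (Mabcd w a b c d *m Sgamma w g).

(* representative vectors of the points of the line S_t (t = None is infinity) *)
Definition Sline (t : option F) (l : F) : 'cV[F]_6 :=
  match t with
  | Some t => mk6 l (cj l) (l * t + cj l * cj t) (cj l * cj t ^+ 2) (l * t ^+ 2) 0
  | None => mk6 0 0 0 (cj l) l 0
  end.

End Defs.

(* Main.v *)
Require Import Defs.
From HB Require Import structures.
From mathcomp Require Import all_boot all_order all_algebra all_field.
From mathcomp Require Import ring.
Import GRing.Theory.
Local Open Scope ring_scope.

Lemma crd_mk6 (F : finFieldType) (x1 x2 x3 x4 x5 x6 : F) k : (0 < k <= 6)%N ->
  crd (mk6 x1 x2 x3 x4 x5 x6) k = nth 0 [:: x1; x2; x3; x4; x5; x6] k.-1.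
Proof. by case/andP=> k0 k6; rewrite /crd /mk6 !mxE inordK // prednK. Qed.

Lemma crdZ (F : finFieldType) (k : F) X j : crd (k *: X) j = k * crd X j.
Proof. by rewrite /crd mxE. Qed.

Lemma hformZ (F : finFieldType) q (w k : F) X Y :
  hform q w (k *: X) Y = k * hform q w X Y.
Proof. rewrite /hform !crdZ; ring. Qed.

Lemma crdM (F : finFieldType) q (w a b c d g : F) k :
  crd (Mabcd q w a b c d *m Sgamma q w g) k = \sum_(j < 6) (Mabcd q w a b c d) (inord k.-1) j * (Sgamma q w g) j 0.
Proof. by rewrite /crd mxE. Qed.

Lemma crdM1 (F : finFieldType) q (w a b c d g : F) :
  crd (Mabcd q w a b c d *m Sgamma q w g) 1 = a ^+ 2 * (g / w) + c ^+ 2 + c * (a + c * cj q w) / w.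
Proof. rewrite crdM !big_ord_recl big_ord0 /Mabcd /Sgamma /mk6 !mxE !inordK //=; ring. Qed.
Lemma crdM5 (F : finFieldType) q (w a b c d g : F) :
  crd (Mabcd q w a b c d *m Sgamma q w g) 5 = b ^+ 2 * (g / w) + d ^+ 2 + (d * (b + d * cj q w) + cj q w) / w.
Proof. rewrite crdM !big_ord_recl big_ord0 /Mabcd /Sgamma /mk6 !mxE !inordK //=; ring. Qed.
Lemma crdM6 (F : finFieldType) q (w a b c d g : F) :
  crd (Mabcd q w a b c d *m Sgamma q w g) 6 = 1.
Proof. rewrite crdM !big_ord_recl big_ord0 /Mabcd /Sgamma /mk6 !mxE !inordK //=; ring. Qed.

Section Cj.
Variables (F : finFieldType) (q : nat).
Hypothesis hq0 : (0 < q)%N.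
Hypothesis hcc : forall x : F, cj q (cj q x) = x.
Hypothesis hcD : forall x y : F, cj q (x + y) = cj q x + cj q y.

Lemma cj0 : cj q (0 : F) = 0. Proof. by rewrite /cj expr0n; case: q hq0. Qed.
Lemma cj1 : cj q (1 : F) = 1. Proof. by rewrite /cj expr1n. Qed.
Lemma cjM (x y : F) : cj q (x * y) = cj q x * cj q y. Proof. by rewrite /cj exprMn. Qed.
Lemma cjX (x : F) : cj q (x ^+ 2) = cj q x ^+ 2. Proof. by rewrite /cj exprAC. Qed.

Lemma hform_some (w t l : F) X : hform q w X (Sline q (Some t) l) =
  l * (w * crd X 1 * t ^+ 2 + w * crd X 5 + cj q w * crd X 6 + crd X 6 * t)
  + cj q l * (cj q w * crd X 2 * cj q t ^+ 2 + cj q w * crd X 4 + w * crd X 6 + crd X 6 * cj q t).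
Proof.
rewrite /hform /Sline !crd_mk6 //= cj0 !hcD !cjM ?cjX ?cjM !hcc.
ring.
Qed.

Lemma hform_none (w l : F) X : hform q w X (Sline q None l) =
  l * (w * crd X 1) + cj q l * (cj q w * crd X 2).
Proof.
rewrite /hform /Sline !crd_mk6 //= cj0 !hcc; ring.
Qed.
End Cj.

Lemma quad_nz (F : finFieldType) (g x y : F) :
  irreducible_poly ('X^2 + 'X + g%:P : {poly F}) ->
  g * x ^+ 2 + x * y + y ^+ 2 = 0 -> x = 0 /\ y = 0.
Proof.
move=> [hs hirr] hQ.
have [x0|xn0] := eqVneq x 0.
  split=> //; move: hQ; rewrite x0 expr0n /= mulr0 mul0r !add0r.
  by move/eqP; rewrite expf_eq0 /= => /eqP.
exfalso.
have hr : root ('X^2 + 'X + g%:P : {poly F}) (y / x).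
  rewrite /root !hornerE.
  have -> : (y / x) ^+ 2 + y / x + g = (g * x ^+ 2 + x * y + y ^+ 2) / x ^+ 2.
    by field; rewrite ?expf_neq0.
  by rewrite hQ mul0r.
have hd : ('X - (y / x)%:P) %| ('X^2 + 'X + g%:P : {poly F}) by rewrite dvdp_XsubCl.
have hsz : size ('X - (y / x)%:P : {poly F}) != 1%N by rewrite size_XsubC.
have := hirr _ hsz hd => /eqp_size; rewrite size_XsubC => h2.
by move: h2; rewrite -addrA size_addl ?size_polyXn ?size_XaddC.
Qed.

Theorem mainTheorem15
  (e : nat) (he : (0 < e)%N) (q : nat) (hq : q = (2 ^ e)%N)
  (F : finFieldType) (hF : #|F| = (q ^ 2)%N)
  (w : F) (hw1 : ~~ inFq q w) (hw2 : w + cj q w = 1)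
  (g : F) (hg : irreducible_poly ('X^2 + 'X + g%:P : {poly F}))
  (u1 u2 u3 : 'cV[F]_6) (hpl : W_plane q w u1 u2 u3)
  (t : option F)
  (hline : forall l : F, l != 0 -> plane_pt q u1 u2 u3 (Sline q t l)) :
  forall v : 'cV[F]_6, plane_pt q u1 u2 u3 v -> ~ in_SgG q w g v.
Proof.
have h2 : (2%:R : F) = 0.
  apply: pcharf0; apply: (@card_finPcharP _ 2 (e * 2)) => //.
  by rewrite hF hq expnM.
have hq0 : (0 < q)%N by rewrite hq expn_gt0.
have hcc : forall x : F, cj q (cj q x) = x.
  by move=> x; rewrite /cj -exprM -[(q * q)%N]/(q ^ 2)%N -hF expf_card.
have sq2 : forall x y : F, (x + y) ^+ 2 = x ^+ 2 + y ^+ 2.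
  move=> x y; have -> : (x + y) ^+ 2 = x ^+ 2 + y ^+ 2 + 2%:R * (x * y) by ring.
  by rewrite h2 mul0r addr0.
have hcD : forall x y : F, cj q (x + y) = cj q x + cj q y.
  move=> x y; rewrite /cj hq; elim: e {he hq hF} => [|n IH]; first by rewrite !expr1.
  by rewrite expnS mulnC !exprM IH sq2.
have hcw : cj q w = 1 - w by rewrite -hw2; ring.
have hw0 : w != 0.
  apply/eqP=> w0; move: hw2; rewrite w0 cj0 // addr0 => /eqP; by rewrite eq_sym oner_eq0.
have key : forall B1 B2 : F, 1 * B1 + 1 * B2 = 0 -> w * B1 + cj q w * B2 = 0 -> B1 = 0.
  move=> B1 B2 H1 Hw.
  have eB2 : B2 = - B1 by apply/eqP; rewrite -subr_eq0 opprK addrC -[B2]mul1r -[B1]mul1r H1.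
  rewrite eB2 hcw in Hw.
  have : B1 = - (w * B1 + (1 - w) * - B1) + 2%:R * (w * B1) by ring.
  by rewrite Hw h2 mul0r oppr0 addr0.
move=> v hv [a [b [c [d [had [hv0 [_ [k hk]]]]]]]].
case: hpl => _ _ _ _ hiso.
have H1 := hiso v _ hv (hline 1 (oner_neq0 _)).
have Hw := hiso v _ hv (hline w hw0).
rewrite hk hformZ in H1; rewrite hk hformZ in Hw.
have hk0 : k != 0 by apply: contra hv0 => /eqP k0; rewrite hk k0 scale0r.
move/eqP: H1; rewrite mulf_eq0 (negPf hk0) /= => /eqP H1.
move/eqP: Hw; rewrite mulf_eq0 (negPf hk0) /= => /eqP Hw.
set MX := Mabcd q w a b c d *m Sgamma q w g in H1 Hw.
case: t hline H1 Hw => [t|] _ H1 Hw.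
- rewrite !hform_some // in H1 Hw.
  rewrite cj1 in H1.
  have := key _ _ H1 Hw; set B1 := (Z in Z = 0) => hB1.
  have eB1 : B1 = g * (t * a + b) ^+ 2 + (t * a + b) * (t * c + d) + (t * c + d) ^+ 2
      + 2%:R * (1 - w - t * a * b * g - t * c * d) + t * (1 - (a * d + b * c)).
    rewrite /B1 /MX crdM1 crdM5 crdM6 hcw.
    by field.
  rewrite had subrr mulr0 addr0 h2 mul0r addr0 hB1 in eB1.
  have [hx hy] := @quad_nz _ _ _ _ hg (esym eB1).
  have : a * d + b * c = - (2%:R * t * a * c) + a * (t * c + d) + (t * a + b) * c by ring.
  by rewrite had hx hy h2 !mul0r mulr0 oppr0 !addr0 => /eqP; rewrite oner_eq0.
- rewrite !hform_none // in H1 Hw.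
  rewrite cj1 in H1.
  have := key _ _ H1 Hw; set B1 := (Z in Z = 0) => hB1.
  have eB1 : B1 = g * a ^+ 2 + a * c + c ^+ 2.
    rewrite /B1 /MX crdM1 hcw; by field.
  rewrite hB1 in eB1.
  have [hx hy] := @quad_nz _ _ _ _ hg (esym eB1).
  by move: had; rewrite hx hy !mul0r mulr0 addr0 => /eqP; rewrite eq_sym oner_eq0.
Qed.
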